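(* Let $w=i_n\cdots i_1$ be a reverse lattice word and $\sigma=\mathrm{std}(w)$. Then the column reading word of $T_w$ equals $\sigma^{-1}$ (in one-line notation).
   Context: A word $w=i_n\cdots i_1$ of positive integers is reverse lattice if in every suffix $i_k\cdots i_1$ the number of $j$'s is at least the number of $(j+1)$'s for every $j\geq1$. $\mathrm{std}(w)$: replace the letters of $w$ (read left to right) by $1,\ldots,n$, smaller letters receiving smaller values, equal letters receiving increasing values from left to right; the result is a permutation in one-line notation. Partitions in French convention (rows numbered bottom to top). For a reverse lattice word, define partitions $\lambda_0=\varnothing$ and, for $k=1,\ldots,n$, $\lambda_k$ obtained from $\lambda_{k-1}$ by adding a box at its addable node in column $i_k$; $T_w$ is the standard reverse tableau of shape $\lambda_n$ in which the box of $\lambda_k$ not in $\lambda_{k-1}$ contains $n-k+1$. The column reading word of a tableau lists the entries of each column in increasing order, columns from left to right. *)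

(* Defs.v *)
From mathcomp Require Import all_boot.
Set Implicit Arguments. Unset Strict Implicit. Unset Printing Implicit Defensive.

(* A word w = i_n ... i_1 is represented by the list [:: i_n; ...; i_1]
   (read left to right).  Hence i_k = nth 0 w (size w - k). *)

Definition reverse_lattice (w : seq nat) : Prop :=
  (forall i, i \in w -> 0 < i) /\
  (forall k j, 1 <= j -> count_mem j.+1 (drop k w) <= count_mem j (drop k w)).

Definition std (w : seq nat) : seq nat :=
  [seq (count (fun y => y < nth 0 w p) w
        + count (pred1 (nth 0 w p)) (take p w)).+1 | p <- iota 0 (size w)].

Definition inv_oneline (s : seq nat) : seq nat :=
  [seq (index r s).+1 | r <- iota 1 (size s)].

(* Tableaux (French convention) as lists of rows, row 1 (bottom) first;
   each row lists its entries from column 1 rightwards. *)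
Definition tableau := seq (seq nat).

Definition shape (t : tableau) : seq nat := [seq size r | r <- t].

Definition col_length (lam : seq nat) (c : nat) : nat := count (fun l => c <= l) lam.

(* Add entry e at the addable node in column c: this node lies in row
   (col_length c) + 1, i.e. row index col_length c (0-indexed). *)
Definition add_box (t : tableau) (c e : nat) : tableau :=
  let r := col_length (shape t) c in
  set_nth [::] t r (rcons (nth [::] t r) e).

Definition Tw (w : seq nat) : tableau :=
  foldl (fun t k => add_box t (nth 0 w (size w - k)) (size w - k).+1)
        [::] (iota 1 (size w)).

Definition column (t : tableau) (c : nat) : seq nat :=
  [seq nth 0 r c.-1 | r <- t & c <= size r].

Definition col_reading_word (t : tableau) : seq nat :=
  flatten [seq sort leq (column t c) | c <- iota 1 (size (head [::] t))].

(* Main.v *)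
Require Import Defs.
From mathcomp Require Import all_boot zify.
Set Implicit Arguments. Unset Strict Implicit. Unset Printing Implicit Defensive.

Lemma geq_tr : transitive geq.
Proof. by move=> a b c /= h1 h2; apply: leq_trans h2 h1. Qed.

Lemma key_sorted (lam : seq nat) c i : sorted geq lam -> i < size lam ->
  (c <= nth 0 lam i) = (i < count (fun l => c <= l) lam).
Proof.
elim: lam i => [//|a l IH] i Hs Hi.
have H0 : ~~ (c <= a) -> count (fun l => c <= l) l = 0.
  move=> Hca; have := order_path_min geq_tr Hs => /allP Hall.
  rewrite (eq_in_count (a2 := pred0)) ?count_pred0 // => y /Hall /= Hy.
  apply/negbTE; move: Hca Hy; rewrite -!ltnNge; lia.
case: i Hi => [|i] Hi /=.
  by case Hca: (c <= a) => //=; rewrite H0 ?Hca.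
rewrite (IH i (path_sorted Hs)) //.
by case Hca: (c <= a) => //=; rewrite H0 ?Hca.
Qed.

Definition Pc (t : tableau) c i := c <= size (nth [::] t i).
Definition Fc (t : tableau) c i := nth 0 (nth [::] t i) c.-1.

Lemma col_iota t c N : 0 < c -> size t <= N ->
  column t c = map (Fc t c) (filter (Pc t c) (iota 0 N)).
Proof.
move=> Hc HN.
rewrite /column -[in LHS](mkseq_nth [::] t) /mkseq filter_map -map_comp.
rewrite -(subnKC HN) iotaD filter_cat map_cat.
rewrite (eq_in_filter (a2 := pred0) (s := iota (0 + size t) _)) ?filter_pred0 ?cats0 //.
move=> i; rewrite mem_iota add0n => /andP[Hi _].
by rewrite /Pc nth_default //=; lia.
Qed.

Lemma filter_iota_pref (P : pred nat) N k : k <= N ->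
  (forall i, i < N -> P i = (i < k)) -> filter P (iota 0 N) = iota 0 k.
Proof.
move=> HkN H; rewrite -(filter_iota_ltn 0 HkN).
apply: eq_in_filter => i; rewrite mem_iota add0n => /andP[_ Hi].
by rewrite H.
Qed.

Definition dec (t : tableau) := sorted geq (Defs.shape t).
Definition colOK (t : tableau) (s : seq (nat * nat)) :=
  forall c, 0 < c -> column t c = [seq x.2 | x <- s & x.1 == c].

Lemma size_column t c : size (column t c) = col_length (Defs.shape t) c.
Proof. by rewrite size_map size_filter /col_length /Defs.shape count_map. Qed.


Lemma step t s c e : dec t -> colOK t s -> 0 < c ->
  (c == 1) || (count (fun x => x.1 == c) s < count (fun x => x.1 == c.-1) s) ->
  dec (add_box t c e) /\ colOK (add_box t c e) (rcons s (c, e)).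
Proof.
move=> Hd Hcol Hc Hlat.
have Hcl : forall c', 0 < c' -> col_length (Defs.shape t) c' = count (fun x => x.1 == c') s.
  by move=> c' Hc'; rewrite -size_column Hcol // size_map size_filter.
have key' : forall c' i, i < size t ->
    (c' <= size (nth [::] t i)) = (i < col_length (Defs.shape t) c').
  move=> c' i Hi; rewrite -(nth_map [::] 0 size Hi).
  by apply: key_sorted; rewrite // size_map.
have Hcle : forall c', col_length (Defs.shape t) c' <= size t.
  by move=> c'; rewrite /col_length (leq_trans (count_size _ _)) // size_map.
set r := col_length (Defs.shape t) c.
have Hrle : r <= size t by apply: Hcle.
have Hdef : forall j, size t <= j -> nth [::] t j = [::] by move=> j Hj; rewrite nth_default.
have Hrow : size (nth [::] t r) = c.-1.
  case: (ltnP r (size t)) => Hrt.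
    have h1 := key' c r Hrt; rewrite ltnn in h1.
    case: (eqVneq c 1) => [Hc1|Nc1].
      by subst c; move: h1; case: (size _) => //.
    rewrite (negbTE Nc1) /= in Hlat.
    have h2 := key' c.-1 r Hrt.
    have Hr : r < col_length (Defs.shape t) c.-1 by rewrite /r !Hcl //; lia.
    rewrite Hr in h2; move: h1 h2; lia.
  have Er : r = size t by apply/eqP; rewrite eqn_leq Hrle Hrt.
  rewrite Hdef ?Er //=.
  case: (eqVneq c 1) => [-> //|Nc1].
  rewrite (negbTE Nc1) /= in Hlat.
  have Hr : r < col_length (Defs.shape t) c.-1 by rewrite /r !Hcl //; lia.
  have := Hcle c.-1; lia.
have Et' : add_box t c e = set_nth [::] t r (rcons (nth [::] t r) e) by [].
rewrite Et'; set t' := set_nth _ _ _ _.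
have Hsize' : size t' = maxn r.+1 (size t) by rewrite size_set_nth.
have Hnth' : forall i, nth [::] t' i = if i == r then rcons (nth [::] t r) e else nth [::] t i.
  by move=> i; rewrite nth_set_nth.
have Hs' : forall i, size (nth [::] t' i) = if i == r then c else size (nth [::] t i).
  by move=> i; rewrite Hnth'; case: eqP => // _; rewrite size_rcons Hrow; lia.
have Hdt : forall i, i.+1 < size t -> size (nth [::] t i.+1) <= size (nth [::] t i).
  move=> i Hi; move/(sortedP 0): Hd => /(_ i); rewrite size_map => /(_ Hi).
  by rewrite !(nth_map [::]) //; lia.
split.
  apply/(sortedP 0) => i; rewrite size_map => Hi.
  rewrite !(nth_map [::]) //; last lia.
  rewrite /= !Hs'.
  case: (eqVneq i r) => [Eir|Nir].
    have -> : (i.+1 == r) = false by apply/negbTE; lia.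
    case: (ltnP i.+1 (size t)) => Hi1.
      have := key' c i.+1 Hi1; rewrite -/r Eir ltnNge leqnSn /=; lia.
    by rewrite Hdef.
  case: (eqVneq i.+1 r) => [Eir|Nir1].
    have Hit : i < size t by lia.
    by have := key' c i Hit; rewrite -/r Eir leqnn => ->.
  apply: Hdt; move: Hi; rewrite Hsize'; lia.
move=> c' Hc'; rewrite filter_rcons /=.
have HN : size t <= size t' by rewrite Hsize' leq_maxr.
rewrite (@col_iota t' c' _ Hc' (leqnn _)).
case: (eqVneq c c') => [Ec|Nc].
  subst c'; rewrite map_rcons -(Hcol c Hc') (@col_iota t c _ Hc' HN).
  have E1 : filter (Pc t' c) (iota 0 (size t')) = iota 0 r.+1.
    apply: filter_iota_pref; first by rewrite Hsize' leq_maxl.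
    move=> i Hi; rewrite /Pc Hs'; case: (eqVneq i r) => [->|Nir]; first by rewrite leqnn ltnSn.
    case: (ltnP i (size t)) => Hit; first by rewrite key' // -/r; lia.
    by rewrite Hdef //=; move: Hc Hit Hrle Nir; lia.
  have E2 : filter (Pc t c) (iota 0 (size t')) = iota 0 r.
    apply: filter_iota_pref; first by rewrite Hsize'; lia.
    move=> i Hi; rewrite /Pc; case: (ltnP i (size t)) => Hit; first by rewrite key'.
    by rewrite Hdef //=; move: Hc Hit Hrle; lia.
  rewrite E1 E2.
  rewrite -addn1 iotaD map_cat cats1 /= add0n.
  congr rcons.
    apply/eq_in_map => i; rewrite mem_iota add0n => /andP[_ Hi].
    by rewrite /Fc Hnth'; have -> : (i == r) = false by apply/negbTE; lia.
  rewrite /Fc Hnth' eqxx nth_rcons Hrow ltnn eqxx //.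
have Hne : forall i, Pc t' c' i = Pc t c' i.
  move=> i; rewrite /Pc Hs'; case: eqP => // ->; rewrite Hrow.
  by move: Nc Hc Hc'; case: (ltngtP c c'); lia.
rewrite -(Hcol c' Hc') (@col_iota t c' _ Hc' HN) (eq_filter Hne).
apply/eq_in_map => i; rewrite mem_filter => /andP[HP _].
rewrite /Fc Hnth'; case: eqP => // Eir; subst i.
rewrite nth_rcons Hrow.
by move: HP; rewrite /Pc Hrow => HP; have -> : c'.-1 < c.-1 by lia.
Qed.


Definition build (s : seq (nat * nat)) : tableau :=
  foldl (fun t x => add_box t x.1 x.2) [::] s.

Definition goodp (s1 : seq (nat * nat)) (x : nat * nat) :=
  0 < x.1 /\ ((x.1 == 1) || (count (fun y => y.1 == x.1) s1 < count (fun y => y.1 == x.1.-1) s1)).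

Lemma build_inv s : (forall i, i < size s -> goodp (take i s) (nth (0,0) s i)) ->
  dec (build s) /\ colOK (build s) s.
Proof.
elim/last_ind: s => [|s x IH] H.
  by split => // c _.
rewrite /build foldl_rcons -/(build s).
have [Hd Hc] : dec (build s) /\ colOK (build s) s.
  apply: IH => i Hi.
  have := H i; rewrite size_rcons nth_rcons Hi -cats1 takel_cat; last exact: ltnW.
  by apply; apply: ltnW.
have := H (size s); rewrite size_rcons ltnSn -cats1 take_size_cat //.
rewrite nth_cat ltnn subnn /= => /(_ isT) [Hx1 Hx2].
destruct x as [c e]; simpl in Hx1, Hx2.
by rewrite cats1; apply: step.
Qed.

Lemma rev_iota0 n : rev (iota 0 n) = map (subn n) (iota 1 n).
Proof.
apply: (@eq_from_nth _ 0); first by rewrite size_rev size_map !size_iota.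
move=> i; rewrite size_rev size_iota => Hi.
rewrite nth_rev ?size_iota // nth_iota; last lia.
by rewrite (nth_map 0) ?size_iota // nth_iota //; lia.
Qed.

Definition sw (w : seq nat) := [seq (nth 0 w p, p.+1) | p <- rev (iota 0 (size w))].

Lemma foldl_map' (A B C : Type) (f : A -> B -> A) (g : C -> B) z s :
  foldl f z (map g s) = foldl (fun a x => f a (g x)) z s.
Proof. by elim: s z => //= x s IH z. Qed.

Lemma Tw_build w : Tw w = build (sw w).
Proof. by rewrite /build /sw rev_iota0 !foldl_map'. Qed.

Lemma cnt_sw w i d : i <= size w ->
  count (fun y => y.1 == d) (take i (sw w)) = count (pred1 d) (drop (size w - i) w).
Proof.
move=> Hi; rewrite /sw -map_take take_rev size_iota drop_iota count_map count_rev add0n.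
have -> : drop (size w - i) w = [seq nth 0 w k | k <- iota (size w - i) (size w - (size w - i))].
  by rewrite map_nth_iota // take_oversize // size_drop.
by rewrite count_map.
Qed.

Lemma good_sw w : reverse_lattice w ->
  forall i, i < size (sw w) -> goodp (take i (sw w)) (nth (0,0) (sw w) i).
Proof.
case=> Hpos Hlat i; rewrite size_map size_rev size_iota => Hi.
set n := size w.
have Hnth : nth (0,0) (sw w) i = (nth 0 w (n - i.+1), (n - i.+1).+1).
  by rewrite (nth_map 0) ?size_rev ?size_iota // nth_rev ?size_iota // nth_iota ?size_iota //; lia.
rewrite Hnth /goodp /= !cnt_sw ?(ltnW Hi) //.
set p := n - i.+1.
have Hp : p < n by rewrite /p; lia.
have Eni : n - i = p.+1 by rewrite /p; lia.
rewrite Eni.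
set c := nth 0 w p.
have Hc : 0 < c by apply: Hpos; apply: mem_nth.
split => //.
case: (eqVneq c 1) => //= Nc1.
have := Hlat p c.-1; rewrite (drop_nth 0 Hp) /= -/c prednK // eqxx.
have -> : (c == c.-1) = false by apply/negbTE; lia.
by move=> H; have := H ltac:(lia); rewrite add1n add0n.
Qed.

Definition Bc (w : seq nat) c := [seq p.+1 | p <- iota 0 (size w) & nth 0 w p == c].

Lemma Tw_inv w : reverse_lattice w -> dec (Tw w) /\
  forall c, 0 < c -> column (Tw w) c = rev (Bc w c).
Proof.
move=> Hw; rewrite Tw_build; have [Hd Hc] := build_inv (good_sw Hw).
split => // c Hc0; rewrite Hc // /sw filter_map -map_comp filter_rev map_rev.
by [].
Qed.


Lemma letters_le w : reverse_lattice w -> forall p, p < size w ->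
  0 < nth 0 w p <= size (head [::] (Tw w)).
Proof.
move=> Hw p Hp; have [Hd Hcol] := Tw_inv Hw.
have Hc : 0 < nth 0 w p by case: Hw => Hpos _; apply: Hpos; apply: mem_nth.
rewrite Hc /=; set c := nth 0 w p.
have Hmem : p.+1 \in Bc w c.
  by apply/mapP; exists p => //; rewrite mem_filter eqxx mem_iota.
have Hsz : 0 < size (column (Tw w) c).
  by rewrite Hcol // size_rev; case: (Bc w c) Hmem.
rewrite size_column in Hsz.
move: Hd Hsz; rewrite /dec /col_length; case: (Tw w) => [|r0 t] //= Hd Hsz.
have := @key_sorted (size r0 :: Defs.shape t) c 0 Hd isT.
by rewrite /= => ->.
Qed.

Lemma count_lt_split (s : seq nat) k :
  count (fun y => y < k.+1) s = count (fun y => y < k) s + count (pred1 k) s.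
Proof.
elim: s => //= y s ->; case: (ltngtP y k) => H /=; try lia.
Qed.

Lemma size_Bc w c : size (Bc w c) = count (pred1 c) w.
Proof.
rewrite size_map size_filter.
have E : [seq nth 0 w i | i <- iota 0 (size w)] = w := mkseq_nth 0 w.
transitivity (count (pred1 c) [seq nth 0 w i | i <- iota 0 (size w)]).
  by rewrite count_map.
by rewrite E.
Qed.

Lemma sum_blocks w : (forall i, i \in w -> 0 < i) -> forall k,
  sumn [seq size (Bc w c) | c <- iota 1 k] = count (fun y => y < k.+1) w.
Proof.
move=> Hpos; elim=> [|k IH].
  rewrite /= (eq_in_count (a2 := pred0)) ?count_pred0 // => y /Hpos /=; lia.
rewrite (_ : iota 1 k.+1 = iota 1 k ++ [:: k.+1]); last by rewrite -[k.+1]addn1 iotaD addn1 add1n.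
rewrite map_cat sumn_cat IH /= addn0 size_Bc.
by rewrite (count_lt_split _ k.+1).
Qed.

Lemma sorted_Bc w c : sorted leq (Bc w c).
Proof.
rewrite /Bc sorted_map; apply: sorted_filter.
  by move=> a b d /=; rewrite !ltnS; apply: leq_trans.
have Es : [seq x.+1 | x <- iota 0 (size w)] = iota 1 (size w).
  by rewrite -[1]/(1+0) iotaDl; apply: eq_map => x; rewrite add1n.
by rewrite -sorted_map Es iota_sorted.
Qed.

Unset Implicit Arguments.

Theorem lemma8p1 (w : seq nat) :
  reverse_lattice w -> col_reading_word (Tw w) = inv_oneline (std w).
Proof.
move=> Hw; have [Hd Hcol] := Tw_inv Hw.
have Hpos : forall i, i \in w -> 0 < i by case: Hw.
have Hlet := letters_le Hw.
set n := size w.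
set M := size (head [::] (Tw w)).
set L := flatten [seq Bc w c | c <- iota 1 M].
have EL : col_reading_word (Tw w) = L.
  rewrite /col_reading_word -/M /L; congr flatten; apply/eq_in_map => c.
  rewrite mem_iota => /andP[Hc _]; rewrite Hcol //.
  have /(perm_sortP leq_total leq_trans anti_leq) -> : perm_eq (rev (Bc w c)) (Bc w c).
    by rewrite perm_rev.
  by apply: sorted_sort; [exact: leq_trans | exact: sorted_Bc].
have HL : size L = n.
  rewrite size_flatten /shape -map_comp.
  rewrite (eq_map (g := fun c => size (Bc w c))) // sum_blocks //.
  rewrite (eq_in_count (a2 := predT)) ?count_predT // => y /(nthP 0) [p Hp <-].
  by have := Hlet p Hp => /andP[_]; rewrite /= ltnS.
set g := fun p => (count (fun y => y < nth 0 w p) w + count (pred1 (nth 0 w p)) (take p w)).+1.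
have Eg : forall p, p < n -> nth 0 (std w) p = g p.
  by move=> p Hp; rewrite /std (nth_map 0) ?size_iota // nth_iota.
have Hsig : forall p, p < n -> nth 0 L (g p).-1 = p.+1.
  move=> p Hp; rewrite /g /=.
  have /andP[Hc HcM] := Hlet p Hp.
  set c := nth 0 w p.
  have EL2 : L = flatten [seq Bc w c' | c' <- iota 1 c.-1] ++ Bc w c ++
                 flatten [seq Bc w c' | c' <- iota c.+1 (M - c)].
    rewrite /L {1}(_ : M = c.-1 + (M - c).+1); last lia.
    by rewrite iotaD map_cat flatten_cat add1n prednK.
  have Hs1 : size (flatten [seq Bc w c' | c' <- iota 1 c.-1]) = count (fun y => y < c) w.
    rewrite size_flatten /shape -map_comp.
    rewrite (eq_map (g := fun c => size (Bc w c))) // sum_blocks //.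
    by rewrite prednK.
  set F1 := filter (fun q => nth 0 w q == c) (iota 0 p).
  set F2 := filter (fun q => nth 0 w q == c) (iota p.+1 (n - p.+1)).
  have EB : Bc w c = map succn F1 ++ p.+1 :: map succn F2.
    rewrite /Bc -/n (_ : n = p + (n - p.+1).+1); last lia.
    rewrite iotaD filter_cat map_cat add0n /= -/c eqxx /=.
    by congr (_ ++ _ :: map _ (filter _ (iota _ _))); lia.
  have HF1 : size (map succn F1) = count (pred1 c) (take p w).
    rewrite size_map size_filter -(@map_nth_iota0 _ 0 w p (ltnW Hp)).
    by rewrite count_map.
  rewrite EL2 nth_cat Hs1 ltnNge leq_addr /= addKn.
  by rewrite EB -catA nth_cat HF1 ltnn subnn.
have Hgpos : forall p, 0 < g p by move=> p; rewrite /g ltn0Sn.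
have Hglt : forall p, p < n -> (g p).-1 < n.
  move=> p Hp; rewrite -HL ltnNge; apply/negP => Hge.
  have := Hsig p Hp; rewrite (nth_default 0 Hge); discriminate.
have Huniq : uniq (std w).
  rewrite /std map_inj_in_uniq; first exact: iota_uniq.
  move=> p q; rewrite !mem_iota !add0n => /andP[_ Hp] /andP[_ Hq] E.
  have E' : g p = g q := E.
  by apply: succn_inj; rewrite -(Hsig p Hp) -(Hsig q Hq) E'.
clearbody g.
have Hszs : size (std w) = n by rewrite /std size_map size_iota.
have Hsub : {subset std w <= iota 1 n}.
  move=> x /(nthP 0) [p Hp <-]; rewrite Hszs in Hp.
  rewrite mem_iota Eg //; have := Hglt p Hp; have := Hgpos p; lia.
have Hsz2 : size (iota 1 n) <= size (std w) by rewrite Hszs size_iota.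
have [_ Heq] := uniq_min_size Huniq Hsub Hsz2.
rewrite EL; apply: (@eq_from_nth _ 0); first by rewrite HL /inv_oneline size_map size_iota Hszs.
move=> i Hi; rewrite HL in Hi.
rewrite /inv_oneline (nth_map 0) ?size_iota ?Hszs // nth_iota //.
have Hin : (1 + i) \in std w by rewrite Heq mem_iota; lia.
set p := index (1 + i) (std w).
have Hp : p < n by rewrite -Hszs index_mem.
have Hnp : nth 0 (std w) p = 1 + i by rewrite nth_index.
rewrite -Hsig //; rewrite Eg // in Hnp; rewrite Hnp add1n //.
Qed.
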